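(* Let $M$ and $k$ be fixed nonnegative integers. Let $\phi(x_1,\dots,x_n)$ be a term of $\mathcal{L}_{\mathrm{Ab}}$ with $n$ variables and depth $l\le k$. Assume $a_1,\dots,a_n\in[-2^M,2^M]$. Then $$f_{\tau(\phi)}(r_{M,k}(a_1),\dots,r_{M,k}(a_n))=r_{M,k}(f_\phi(a_1,\dots,a_n)),$$ and moreover $r_{M,k}(f_\phi(a_1,\dots,a_n))\in\left[\tfrac12-\tfrac{1}{2^{k-l+1}},\tfrac12+\tfrac{1}{2^{k-l+1}}\right]$.
   Context: $\mathcal{L}_{\mathrm{Ab}}=\langle +,-,0,\wedge,\vee\rangle$ is the language of abelian lattice-ordered groups; for an $\mathcal{L}_{\mathrm{Ab}}$-term $\phi$ in variables $x_1,\dots,x_n$, $f_\phi:\mathbb{R}^n\to\mathbb{R}$ is its term function in the ordered additive group of reals ($+$, unary $-$, $0$, $\wedge=\min$, $\vee=\max$). $\mathcal{L}_{\mathrm{MV}[\frac12]}=\langle\oplus,\otimes,\neg,\to,0,1,\tfrac12,\wedge,\vee\rangle$ is interpreted in $[0,1]_{\text{\L}}[\tfrac12]$: domain $[0,1]$, $\neg a=1-a$, $a\otimes b=\max(0,a+b-1)$, $a\oplus b=\min(1,a+b)$, $a\to b=\min(1,1-a+b)$, $\wedge=\min$, $\vee=\max$, constants $0,1,\tfrac12$ interpreted as themselves; $f_\psi:[0,1]^n\to[0,1]$ denotes the term function of an $\mathcal{L}_{\mathrm{MV}[\frac12]}$-term $\psi$. Depth: variables and constants have depth $0$, $\mathrm{depth}(-\phi)=\mathrm{depth}(\phi)+1$,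 and $\mathrm{depth}(\phi\circ\psi)=\max(\mathrm{depth}(\phi),\mathrm{depth}(\psi))+1$ for $\circ\in\{+,\wedge,\vee\}$. The translation $\tau$ from $\mathcal{L}_{\mathrm{Ab}}$-terms to $\mathcal{L}_{\mathrm{MV}[\frac12]}$-terms is defined recursively: $\tau(x)=x$ for variables $x$; $\tau(0)=\tfrac12$; $\tau(-\phi)=\neg\tau(\phi)$; $\tau(\phi+\psi)=(\tau(\phi)\oplus\tau(\psi))\otimes(\tfrac12\oplus(\tau(\phi)\otimes\tau(\psi)))$; $\tau(\phi\vee\psi)=\tau(\phi)\vee\tau(\psi)$; $\tau(\phi\wedge\psi)=\tau(\phi)\wedge\tau(\psi)$. For nonnegative integers $M,k$, $r_{M,k}:\mathbb{R}\to\mathbb{R}$ is $r_{M,k}(a)=\frac{a}{2^{M+k+1}}+\frac12$. *)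

(* Defs.v *)
From Stdlib Require Import Reals Lra Lia.
Open Scope R_scope.

Inductive AbTerm : Type :=
| AVar : nat -> AbTerm
| AZero : AbTerm
| ANeg : AbTerm -> AbTerm
| AAdd : AbTerm -> AbTerm -> AbTerm
| AMeet : AbTerm -> AbTerm -> AbTerm
| AJoin : AbTerm -> AbTerm -> AbTerm.

Inductive MVTerm : Type :=
| MVar : nat -> MVTerm
| MZero : MVTerm
| MOne : MVTerm
| MHalf : MVTerm
| MNeg : MVTerm -> MVTerm
| MOplus : MVTerm -> MVTerm -> MVTerm
| MOtimes : MVTerm -> MVTerm -> MVTerm
| MImp : MVTerm -> MVTerm -> MVTerm
| MMeet : MVTerm -> MVTerm -> MVTerm
| MJoin : MVTerm -> MVTerm -> MVTerm.

Fixpoint ab_vars_lt (n : nat) (t : AbTerm) : Prop :=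
  match t with
  | AVar i => (i < n)%nat
  | AZero => True
  | ANeg s => ab_vars_lt n s
  | AAdd s u | AMeet s u | AJoin s u => ab_vars_lt n s /\ ab_vars_lt n u
  end.

Fixpoint eval_Ab (t : AbTerm) (a : nat -> R) : R :=
  match t with
  | AVar i => a i
  | AZero => 0
  | ANeg s => - eval_Ab s a
  | AAdd s u => eval_Ab s a + eval_Ab u a
  | AMeet s u => Rmin (eval_Ab s a) (eval_Ab u a)
  | AJoin s u => Rmax (eval_Ab s a) (eval_Ab u a)
  end.

(* Term function in the standard MV-algebra [0,1] with constant 1/2
   (the operations are given by their defining formulas; on inputs in
   [0,1] these are exactly the operations of [0,1]_L[1/2]). *)
Fixpoint eval_MV (t : MVTerm) (a : nat -> R) : R :=
  match t with
  | MVar i => a i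
  | MZero => 0
  | MOne => 1
  | MHalf => 1/2
  | MNeg s => 1 - eval_MV s a
  | MOplus s u => Rmin 1 (eval_MV s a + eval_MV u a)
  | MOtimes s u => Rmax 0 (eval_MV s a + eval_MV u a - 1)
  | MImp s u => Rmin 1 (1 - eval_MV s a + eval_MV u a)
  | MMeet s u => Rmin (eval_MV s a) (eval_MV u a)
  | MJoin s u => Rmax (eval_MV s a) (eval_MV u a)
  end.

Fixpoint depth (t : AbTerm) : nat :=
  match t with
  | AVar _ | AZero => 0
  | ANeg s => S (depth s)
  | AAdd s u | AMeet s u | AJoin s u => S (Nat.max (depth s) (depth u))
  end.

Fixpoint tau (t : AbTerm) : MVTerm :=
  match t with
  | AVar i => MVar i
  | AZero => MHalf
  | ANeg s => MNeg (tau s)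
  | AAdd s u =>
      MOtimes (MOplus (tau s) (tau u)) (MOplus MHalf (MOtimes (tau s) (tau u)))
  | AJoin s u => MJoin (tau s) (tau u)
  | AMeet s u => MMeet (tau s) (tau u)
  end.

Definition r (M k : nat) (a : R) : R := a / 2 ^ (M + k + 1) + 1/2.

(* Main.v *)
Require Import Defs.
From Stdlib Require Import Reals Lra Lia.
Open Scope R_scope.

Lemma Rabs_le_between' (z b : R) : Rabs z <= b -> - b <= z <= b.
Proof. unfold Rabs; destruct Rcase_abs; lra. Qed.

Lemma divbound (z C : R) : 0 < C -> Rabs z <= C / 2 -> -1/2 <= z / C <= 1/2.
Proof.
  intros HC Hz. apply Rabs_le_between' in Hz.
  assert (HiC : 0 < / C) by (apply Rinv_0_lt_compat; lra).
  unfold Rdiv. split.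
  - replace (-1 * /2) with ((- (C * /2)) * / C) by (field; lra).
    apply Rmult_le_compat_r; lra.
  - replace (1 * /2) with ((C * /2) * / C) by (field; lra).
    apply Rmult_le_compat_r; lra.
Qed.

Lemma rE M k x : r M k x = x / (2 ^ M * 2 ^ k * 2) + 1/2.
Proof. unfold r. rewrite !pow_add. f_equal. f_equal. simpl. ring. Qed.

Lemma pow_mono (m n : nat) : (m <= n)%nat -> 2 ^ m <= 2 ^ n.
Proof. intros; apply Rle_pow; lra || lia. Qed.

Lemma r_mono M k x y : x <= y -> r M k x <= r M k y.
Proof.
  intros. rewrite !rE. unfold Rdiv.
  assert (0 < / (2 ^ M * 2 ^ k * 2)).
  { apply Rinv_0_lt_compat. assert (0 < 2^M) by (apply pow_lt; lra).
    assert (0 < 2^k) by (apply pow_lt; lra). nra. }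
  nra.
Qed.

Lemma r_min M k x y : Rmin (Defs.r M k x) (Defs.r M k y) = r M k (Rmin x y).
Proof.
  unfold Rmin; destruct (Rle_dec x y) as [H1|H1], (Rle_dec (Defs.r M k x) (Defs.r M k y)) as [H2|H2]; auto.
  - pose proof (r_mono M k x y H1); lra.
  - pose proof (r_mono M k y x ltac:(lra)); lra.
Qed.

Lemma r_max M k x y : Rmax (Defs.r M k x) (Defs.r M k y) = r M k (Rmax x y).
Proof.
  unfold Rmax; destruct (Rle_dec x y) as [H1|H1], (Rle_dec (Defs.r M k x) (Defs.r M k y)) as [H2|H2]; auto.
  - pose proof (r_mono M k x y H1); lra.
  - pose proof (r_mono M k y x ltac:(lra)); lra.
Qed.

Lemma gen M k n phi a :
  ab_vars_lt n phi -> (depth phi <= k)%nat ->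
  (forall i : nat, (i < n)%nat -> - 2 ^ M <= a i <= 2 ^ M) ->
  eval_MV (tau phi) (fun i => r M k (a i)) = r M k (eval_Ab phi a) /\
  Rabs (eval_Ab phi a) <= 2 ^ M * 2 ^ depth phi.
Proof.
  intros Hv Hd Ha.
  assert (HM : 0 < 2^M) by (apply pow_lt; lra).
  induction phi; simpl in *.
  - split; auto. rewrite Rmult_1_r. apply Rabs_le. auto.
  - split. rewrite rE. assert (0 < 2^k) by (apply pow_lt; lra).
    field; split; apply Rgt_not_eq; lra.
    rewrite Rabs_R0. lra.
  - destruct (IHphi Hv ltac:(lia)) as [E B]. rewrite E. split.
    + rewrite !rE. assert (0 < 2^k) by (apply pow_lt; lra).
      field; split; apply Rgt_not_eq; lra.
    + rewrite Rabs_Ropp. assert (2^depth phi <= 2 * 2^depth phi).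
      { assert (0 < 2^depth phi) by (apply pow_lt; lra). lra. } nra.
  - destruct Hv as [Hv1 Hv2].
    destruct (IHphi1 Hv1 ltac:(lia)) as [E1 B1].
    destruct (IHphi2 Hv2 ltac:(lia)) as [E2 B2].
    rewrite E1, E2.
    set (D := Nat.max (depth phi1) (depth phi2)) in *.
    assert (h1 := pow_mono (depth phi1) D ltac:(lia)).
    assert (h2 := pow_mono (depth phi2) D ltac:(lia)).
    assert (hk := pow_mono (S D) k ltac:(lia)). simpl in hk.
    set (x := eval_Ab phi1 a) in *. set (y := eval_Ab phi2 a) in *.
    assert (Bxy : Rabs (x + y) <= 2 ^ M * (2 * 2 ^ D)).
    { eapply Rle_trans. apply Rabs_triang. nra. }
    split; [|exact Bxy].
    assert (HK : 0 < 2^k) by (apply pow_lt; lra).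
    set (C := 2 ^ M * 2 ^ k * 2).
    assert (HC : 0 < C) by (unfold C; nra).
    assert (Hs : -1/2 <= (x+y)/C <= 1/2).
    { apply divbound. exact HC. unfold C. nra. }
    assert (Hsplit : (x+y)/C = x/C + y/C) by (field; lra).
    rewrite !rE; fold C. rewrite Hsplit in *.
    set (X := x / C) in *. set (Y := y / C) in *.
    unfold Rmin, Rmax; repeat destruct Rle_dec; lra.
  - destruct Hv as [Hv1 Hv2].
    destruct (IHphi1 Hv1 ltac:(lia)) as [E1 B1].
    destruct (IHphi2 Hv2 ltac:(lia)) as [E2 B2].
    rewrite E1, E2.
    assert (h1 := pow_mono (depth phi1) (S (Nat.max (depth phi1) (depth phi2))) ltac:(lia)).
    assert (h2 := pow_mono (depth phi2) (S (Nat.max (depth phi1) (depth phi2))) ltac:(lia)).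
    split. apply r_min.
    apply Rmult_le_compat_l with (r := 2^M) in h1; [|lra].
    apply Rmult_le_compat_l with (r := 2^M) in h2; [|lra].
    apply Rabs_le. apply Rabs_le_between' in B1. apply Rabs_le_between' in B2.
    simpl in h1, h2; unfold Rmin; destruct Rle_dec; lra.
  - destruct Hv as [Hv1 Hv2].
    destruct (IHphi1 Hv1 ltac:(lia)) as [E1 B1].
    destruct (IHphi2 Hv2 ltac:(lia)) as [E2 B2].
    rewrite E1, E2.
    assert (h1 := pow_mono (depth phi1) (S (Nat.max (depth phi1) (depth phi2))) ltac:(lia)).
    assert (h2 := pow_mono (depth phi2) (S (Nat.max (depth phi1) (depth phi2))) ltac:(lia)).
    split. apply r_max.
    apply Rmult_le_compat_l with (r := 2^M) in h1; [|lra].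
    apply Rmult_le_compat_l with (r := 2^M) in h2; [|lra].
    apply Rabs_le. apply Rabs_le_between' in B1. apply Rabs_le_between' in B2.
    simpl in h1, h2; unfold Rmax; destruct Rle_dec; lra.
Qed.

Theorem mainTheorem4 (M k n : nat) (phi : AbTerm) (a : nat -> R) :
  ab_vars_lt n phi ->
  (depth phi <= k)%nat ->
  (forall i : nat, (i < n)%nat -> - 2 ^ M <= a i <= 2 ^ M) ->
  eval_MV (tau phi) (fun i => r M k (a i)) = r M k (eval_Ab phi a) /\
  1/2 - 1 / 2 ^ (k - depth phi + 1) <= r M k (eval_Ab phi a) <=
  1/2 + 1 / 2 ^ (k - depth phi + 1).
Proof.
  intros Hv Hd Ha.
  destruct (gen M k n phi a Hv Hd Ha) as [E B]. split; [exact E|].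
  assert (HM : 0 < 2^M) by (apply pow_lt; lra).
  set (d := depth phi) in *. set (e := (k - d)%nat).
  assert (Hk : k = (e + d)%nat) by (unfold e; lia).
  assert (He : 0 < 2^e) by (apply pow_lt; lra).
  assert (Hd' : 0 < 2^d) by (apply pow_lt; lra).
  rewrite rE. fold e. rewrite Hk, !pow_add. simpl (2^1).
  set (x := eval_Ab phi a) in *.
  assert (Hs : -1/2 <= x / (2^M * (2^e*2^d) * 2) * (2^e) <= 1/2).
  { replace (x / (2^M * (2^e*2^d) * 2) * (2^e)) with (x / (2^M*2^d*2)) by (field; lra).
    apply divbound. nra. lra. }
  assert (Hinv : 1 / (2^e * (2*1)) = / 2^e * /2) by (field; lra).
  rewrite Hinv.
  set (t := x / (2 ^ M * (2 ^ e * 2 ^ d) * 2)) in *.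
  assert (/2^e * 2^e = 1) by (field; lra).
  assert (0 < /2^e) by (apply Rinv_0_lt_compat; lra).
  split; nra.
Qed.
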